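(* Let $\sum_{n=1}^{\infty}x_n$ be a divergent series of positive real terms with $\lim_{n\to\infty}x_n=0$, and let $S=\{\sum_{n=1}^{\infty}(x_n-x_{\sigma(n)}) : \sigma\in S_\infty,\ \text{the series converges}\}$. Then either $S=\mathbb{R}$ or $S$ is a halfline bounded from below, i.e. there is $c\in\mathbb{R}$ with $S=[c,\infty)$ or $S=(c,\infty)$.
   Context: $S_\infty$ denotes the set of all permutations of $\mathbb{N}$. *)

(* Defs.v *)
From Stdlib Require Import Reals.
Open Scope R_scope.

Definition is_perm_nat (sigma : nat -> nat) : Prop :=
  (forall m n, sigma m = sigma n -> m = n) /\ (forall k, exists n, sigma n = k).

Definition rearr_diff_sum (x : nat -> R) (sigma : nat -> nat) (s : R) : Prop :=
  Un_cv (fun N => sum_f_R0 (fun n => x n - x (sigma n)) N) s.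

Definition S_set (x : nat -> R) (s : R) : Prop :=
  exists sigma, is_perm_nat sigma /\ rearr_diff_sum x sigma s.

(* Main.v *)
Require Import Defs.
From Stdlib Require Import Reals Lra Lia List ClassicalEpsilon Classical Permutation.
Import ListNotations.
Open Scope R_scope.

Definition lsum (f : nat -> R) (l : list nat) : R :=
  fold_right (fun j s => f j + s) 0 l.

Lemma lsum_app f l1 l2 : lsum f (l1 ++ l2) = lsum f l1 + lsum f l2.
Proof. induction l1; simpl; [lra|rewrite IHl1; lra]. Qed.

Lemma lsum_perm f l l' : Permutation l l' -> lsum f l = lsum f l'.
Proof. intro H; induction H; simpl; lra. Qed.

Lemma lsum_filter_split f (p : nat -> bool) l :
  lsum f l = lsum f (filter p l) + lsum f (filter (fun x => negb (p x)) l).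
Proof. induction l; simpl; [lra|]. destruct (p a); simpl; rewrite IHl; lra. Qed.

Lemma lsum_nonneg f l : (forall j, In j l -> 0 <= f j) -> 0 <= lsum f l.
Proof.
  induction l; simpl; intros H; [lra|].
  assert (0 <= f a) by (apply H; auto). assert (0 <= lsum f l) by (apply IHl; auto). lra.
Qed.

Lemma lsum_seq f N : lsum f (seq 0 (S N)) = sum_f_R0 f N.
Proof.
  induction N; [simpl; lra|].
  rewrite seq_S, lsum_app, IHN. simpl. lra.
Qed.

Lemma lsum_map f g l : lsum f (map g l) = lsum (fun i => f (g i)) l.
Proof. induction l; simpl; [lra|rewrite IHl; lra]. Qed.

Lemma lsum_incl f l l' : (forall j, 0 <= f j) -> NoDup l -> NoDup l' -> incl l l' ->
  lsum f l <= lsum f l'.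
Proof.
  intros Hf Hl Hl' Hi.
  rewrite (lsum_filter_split f (fun j => if in_dec Nat.eq_dec j l then true else false) l').
  assert (Permutation l (filter (fun j => if in_dec Nat.eq_dec j l then true else false) l')).
  { apply NoDup_Permutation; auto. apply NoDup_filter; auto.
    intro j; rewrite filter_In; split.
    - intro H; split; [apply Hi; auto|]. destruct (in_dec Nat.eq_dec j l); tauto.
    - intros [_ H]. destruct (in_dec Nat.eq_dec j l); [auto|discriminate]. }
  rewrite <- (lsum_perm f _ _ H).
  assert (0 <= lsum f (filter (fun x => negb (if in_dec Nat.eq_dec x l then true else false)) l'))
    by (apply lsum_nonneg; auto). lra.
Qed.

Lemma lsum_one_zero l : lsum (fun _ => 1) l = 0 -> l = [].
Proof.
  destruct l; simpl; auto. intro H.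
  assert (0 <= lsum (fun _ => 1) l) by (apply lsum_nonneg; intros; lra). lra.
Qed.

Lemma sum_zero N : sum_f_R0 (fun _ => 0) N = 0.
Proof. induction N; simpl; lra. Qed.

Lemma in_le_list_max j l : In j l -> (j <= list_max l)%nat.
Proof.
  intro H. assert (Hf := proj1 (list_max_le l (list_max l)) (le_n _)).
  rewrite Forall_forall in Hf. auto.
Qed.

Section Key.
Variables (y : nat -> R) (delta : R).
Hypotheses (hy : forall n, 0 < y n) (hy0 : Un_cv y 0)
  (hdiv : ~ exists l, Un_cv (sum_f_R0 y) l) (hd : 0 < delta).

Definition notin (l : list nat) (j : nat) : bool :=
  if in_dec Nat.eq_dec j l then false else true.
Definition pend (n : nat) (l : list nat) := filter (notin l) (seq 0 (S n)).

Fixpoint amax (d : nat) (l : list nat) : nat :=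
  match l with
  | [] => d
  | a :: t => if Rle_dec (y d) (y a) then amax a t else amax d t
  end.

Definition tinyP n l j := (n < j)%nat /\ ~ In j l /\ y j <= (/2)^n.
Definition tiny n l := epsilon (inhabits 0%nat) (tinyP n l).

Definition choose n l :=
  match pend n l with
  | [] => tiny n l
  | a :: t => if Rle_dec delta (lsum y (a :: t) - y (amax a t)) then amax a t else tiny n l
  end.

Fixpoint hist n := match n with O => [] | S m => choose m (hist m) :: hist m end.
Definition out n := choose n (hist n).

Lemma amax_in d l : In (amax d l) (d :: l).
Proof.
  revert d; induction l; intro d; simpl; auto.
  destruct (Rle_dec (y d) (y a)).
  - specialize (IHl a). simpl in IHl. tauto.
  - specialize (IHl d). simpl in IHl. tauto.
Qed.

Lemma amax_ge d l j : In j (d :: l) -> y j <= y (amax d l).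
Proof.
  revert d j; induction l; intros d j H; simpl in *.
  - destruct H as [H|[]]; subst; lra.
  - destruct (Rle_dec (y d) (y a)).
    + destruct H as [H|[H|H]]; subst.
      * assert (y a <= y (amax a l)) by (apply IHl; simpl; auto). lra.
      * apply IHl; simpl; auto.
      * apply IHl; simpl; auto.
    + destruct H as [H|[H|H]]; subst.
      * apply IHl; simpl; auto.
      * assert (y d <= y (amax d l)) by (apply IHl; simpl; auto). lra.
      * apply IHl; simpl; auto.
Qed.

Lemma In_pend j n l : In j (pend n l) <-> (j <= n)%nat /\ ~ In j l.
Proof.
  unfold pend, notin. rewrite filter_In, in_seq.
  destruct (in_dec Nat.eq_dec j l); split; intros H; try tauto.
  - destruct H; discriminate.
  - destruct H; split; [lia|auto].
  - destruct H; split; [lia|auto].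
Qed.

Lemma pend_S n l : pend (S n) l =
  pend n l ++ (if in_dec Nat.eq_dec (S n) l then [] else [S n]).
Proof.
  unfold pend. rewrite (seq_S (S n)), filter_app. f_equal.
  simpl. unfold notin. destruct (in_dec Nat.eq_dec (S n) l); auto.
Qed.

Lemma notin_self a l : notin (a :: l) a = false.
Proof. unfold notin. destruct (in_dec Nat.eq_dec a (a :: l)); auto. simpl in n; tauto. Qed.

Lemma notin_other a b l : b <> a -> notin (a :: l) b = notin l b.
Proof.
  intro H. unfold notin.
  destruct (in_dec Nat.eq_dec b (a :: l)) as [[E|E]|E];
  destruct (in_dec Nat.eq_dec b l); subst; simpl in *; tauto.
Qed.

Lemma notin_true a l : ~ In a l -> notin l a = true.
Proof. unfold notin; destruct (in_dec Nat.eq_dec a l); tauto. Qed.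

Lemma lsum_cons f a l : lsum f (a :: l) = f a + lsum f l.
Proof. reflexivity. Qed.

Lemma rem_out s a l : ~ In a s -> filter (notin (a :: l)) s = filter (notin l) s.
Proof.
  intro H. apply filter_ext_in. intros z Hz. apply notin_other.
  intro; subst; tauto.
Qed.

Lemma rem_in f s a l : NoDup s -> In a s -> ~ In a l ->
  lsum f (filter (notin (a :: l)) s) = lsum f (filter (notin l) s) - f a.
Proof.
  induction s as [|b s IH]; intros Hs Ha Hl; [destruct Ha|].
  inversion Hs; subst.
  cbn [filter].
  destruct Ha as [Ha|Ha].
  - subst b. rewrite notin_self, (notin_true a l Hl), lsum_cons, rem_out; auto. lra.
  - assert (b <> a) by (intro; subst; tauto).
    rewrite notin_other by auto.
    destruct (notin l b); [rewrite !lsum_cons|]; rewrite IH; auto; lra.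
Qed.

Lemma tiny_spec n l : tinyP n l (tiny n l).
Proof.
  unfold tiny. apply epsilon_spec.
  destruct (hy0 ((/2)^n)) as [N HN]. { apply pow_lt; lra. }
  exists (N + n + 1 + list_max l)%nat. split; [lia|split].
  - intro H. apply in_le_list_max in H. lia.
  - specialize (HN (N + n + 1 + list_max l)%nat ltac:(lia)).
    unfold R_dist in HN. rewrite Rminus_0_r in HN.
    apply Rabs_def2 in HN. lra.
Qed.

Definition isA n := exists a t, pend n (hist n) = a :: t /\
  delta <= lsum y (a :: t) - y (amax a t) /\ out n = amax a t.
Definition isT n := (pend n (hist n) = [] \/ exists a t, pend n (hist n) = a :: t /\
  lsum y (a :: t) - y (amax a t) < delta) /\ out n = tiny n (hist n).

Lemma step_cases n : isA n \/ isT n.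
Proof.
  unfold isA, isT, out, choose.
  destruct (pend n (hist n)) as [|a t].
  - right. auto.
  - destruct (Rle_dec delta (lsum y (a :: t) - y (amax a t))).
    + left. exists a, t. auto.
    + right. split; auto. right. exists a, t. split; auto. lra.
Qed.

Lemma out_notin n : ~ In (out n) (hist n).
Proof.
  destruct (step_cases n) as [(a&t&Hp&_&Ho)|(_&Ho)]; rewrite Ho.
  - assert (In (amax a t) (pend n (hist n))) by (rewrite Hp; apply amax_in).
    apply In_pend in H. tauto.
  - apply (tiny_spec n (hist n)).
Qed.

Lemma out_bound n : (out n <= n)%nat \/ y (out n) <= (/2)^n.
Proof.
  destruct (step_cases n) as [(a&t&Hp&_&Ho)|(_&Ho)]; rewrite Ho.
  - assert (In (amax a t) (pend n (hist n))) by (rewrite Hp; apply amax_in).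
    apply In_pend in H. left; tauto.
  - right. apply (tiny_spec n (hist n)).
Qed.

Lemma In_hist j n : In j (hist n) <-> exists i, (i < n)%nat /\ out i = j.
Proof.
  induction n; simpl.
  - split; [tauto|intros (i&Hi&_); lia].
  - fold (out n). rewrite IHn. split.
    + intros [H|(i&Hi&H)]; [exists n; split; auto|exists i; split; auto].
    + intros (i&Hi&H). destruct (Nat.eq_dec i n); [left; subst; auto|right; exists i; split; auto; lia].
Qed.

Lemma out_inj i k : out i = out k -> i = k.
Proof.
  intro H. destruct (Nat.lt_total i k) as [L|[L|L]]; auto.
  - exfalso. apply (out_notin k). apply In_hist. exists i; auto.
  - exfalso. apply (out_notin i). apply In_hist. exists k; auto.
Qed.

Lemma hist_NoDup n : NoDup (hist n).
Proof.
  induction n; simpl; constructor; auto. apply out_notin.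
Qed.

Lemma lsum_hist f (p : nat -> bool) N :
  lsum f (filter p (hist (S N))) =
  sum_f_R0 (fun i => if p (out i) then f (out i) else 0) N.
Proof.
  induction N.
  - change (hist 1) with (out 0 :: []). cbn [filter sum_f_R0].
    destruct (p (out 0)); unfold lsum; simpl; lra.
  - change (hist (S (S N))) with (out (S N) :: hist (S N)).
    cbn [filter sum_f_R0]. rewrite <- IHN.
    destruct (p (out (S N))); rewrite ?lsum_cons; lra.
Qed.

Lemma identity f N :
  sum_f_R0 (fun n => f n - f (out n)) N =
  lsum f (pend N (hist (S N))) - lsum f (filter (Nat.ltb N) (hist (S N))).
Proof.
  rewrite minus_sum, <- lsum_seq.
  assert (E : lsum f (hist (S N)) = sum_f_R0 (fun n => f (out n)) N).
  { rewrite <- (lsum_hist f (fun _ => true)). f_equal.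
    induction (hist (S N)); simpl; congruence. }
  rewrite <- E. unfold pend.
  rewrite (lsum_filter_split f (notin (hist (S N))) (seq 0 (S N))).
  rewrite (lsum_filter_split f (Nat.ltb N) (hist (S N))).
  assert (P : Permutation (filter (fun x => negb (notin (hist (S N)) x)) (seq 0 (S N)))
                          (filter (fun x => negb (Nat.ltb N x)) (hist (S N)))).
  { apply NoDup_Permutation.
    - apply NoDup_filter, seq_NoDup.
    - apply NoDup_filter, hist_NoDup.
    - intro j. rewrite !filter_In, in_seq. unfold notin.
      destruct (Nat.ltb_spec N j);
      destruct (in_dec Nat.eq_dec j (hist (S N))); cbn [negb];
      split; intros [H1 H2]; try discriminate; try tauto; try (exfalso; lia); split; auto; lia. }
  rewrite (lsum_perm f _ _ P). lra.
Qed.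

Definition av n := lsum y (pend n (hist n)).
Definition Pv n := lsum y (pend n (hist (S n))).
Definition Bv N := lsum y (filter (Nat.ltb N) (hist (S N))).

Lemma aS n : av (S n) = Pv n + (if in_dec Nat.eq_dec (S n) (hist (S n)) then 0 else y (S n)).
Proof.
  unfold av, Pv. rewrite pend_S, lsum_app.
  destruct (in_dec Nat.eq_dec (S n) (hist (S n))); unfold lsum at 2; simpl; lra.
Qed.

Lemma a_ge_P n : Pv n <= av (S n).
Proof.
  rewrite aS. destruct (in_dec Nat.eq_dec (S n) (hist (S n))); [lra|].
  assert (0 < y (S n)) by apply hy. lra.
Qed.

Lemma P_A n : isA n -> Pv n = av n - y (out n) /\ delta <= Pv n.
Proof.
  intros (a0&t&Hp&Hd&Ho).
  assert (Hin : In (out n) (pend n (hist n))) by (rewrite Hp, Ho; apply amax_in).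
  apply In_pend in Hin.
  assert (E : Pv n = av n - y (out n)).
  { unfold Pv, av. change (hist (S n)) with (out n :: hist n). unfold pend.
    rewrite rem_in; auto. apply seq_NoDup. apply in_seq. lia. tauto. }
  split; auto. rewrite E. unfold av. rewrite Hp, Ho. lra.
Qed.

Lemma P_T n : isT n -> Pv n = av n.
Proof.
  intros (_&Ho).
  unfold Pv, av. change (hist (S n)) with (out n :: hist n). unfold pend.
  rewrite rem_out; auto. rewrite in_seq. rewrite Ho.
  destruct (tiny_spec n (hist n)) as [H _]. lia.
Qed.

Lemma P_T_bound n : isT n -> Pv n = 0 \/ exists M, In M (pend n (hist n)) /\ Pv n < delta + y M.
Proof.
  intros HT. rewrite (P_T n HT). destruct HT as [[Hp|(a0&t&Hp&Hl)] _]; unfold av; rewrite Hp.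
  - left; reflexivity.
  - right. exists (amax a0 t). split; [apply amax_in|lra].
Qed.

Lemma P_A_mono n : isA (S n) -> Pv (S n) <= Pv n.
Proof.
  intro HA. destruct (P_A _ HA) as [E _]. rewrite E, aS.
  destruct (in_dec Nat.eq_dec (S n) (hist (S n))) as [i|ni].
  - assert (0 < y (out (S n))) by apply hy. lra.
  - destruct HA as (a0&t&Hp&Hd&Ho).
    assert (In (S n) (pend (S n) (hist (S n)))) by (apply In_pend; auto).
    rewrite Hp in H. apply (amax_ge a0 t) in H. rewrite Ho. lra.
Qed.

Lemma B_nonneg N : 0 <= Bv N.
Proof. apply lsum_nonneg. intros; left; apply hy. Qed.

Lemma D_eq N : sum_f_R0 (fun n => y n - y (out n)) N = Pv N - Bv N.
Proof. apply identity. Qed.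

Lemma y_le_sum n N : (n <= N)%nat -> y n <= sum_f_R0 y N.
Proof.
  induction N; intro H.
  - replace n with 0%nat by lia. simpl. lra.
  - simpl. destruct (Nat.eq_dec n (S N)).
    + subst. assert (0 <= sum_f_R0 y N) by (apply cond_pos_sum; intro; left; apply hy). lra.
    + assert (y n <= sum_f_R0 y N) by (apply IHN; lia).
      assert (0 < y (S N)) by apply hy. lra.
Qed.

Lemma y_bounded : exists C, forall n, y n <= C.
Proof.
  destruct (hy0 1 ltac:(lra)) as [N HN].
  exists (1 + sum_f_R0 y N). intro n.
  assert (0 <= sum_f_R0 y N) by (apply cond_pos_sum; intro; left; apply hy).
  destruct (Nat.le_gt_cases N n).
  - specialize (HN n H0). unfold R_dist in HN. rewrite Rminus_0_r in HN.
    apply Rabs_def2 in HN. lra.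
  - assert (y n <= sum_f_R0 y N) by (apply y_le_sum; lia). lra.
Qed.

Lemma T_small i : isT i -> y (out i) <= (/2)^i.
Proof. intros [_ Ho]. rewrite Ho. apply (tiny_spec i (hist i)). Qed.

Lemma half_pow_le1 n : (/2)^n <= 1.
Proof. rewrite <- (pow1 n). apply pow_incr. lra. Qed.

Lemma half_pow_pos n : 0 < (/2)^n.
Proof. apply pow_lt. lra. Qed.

Lemma sum_growing : Un_growing (sum_f_R0 y).
Proof. intro n. simpl. assert (0 < y (S n)) by apply hy. lra. Qed.

Lemma IA n0 : exists n, (n0 <= n)%nat /\ isA n.
Proof.
  apply NNPP; intro Hn.
  assert (HT : forall n, (n0 <= n)%nat -> isT n).
  { intros n Hle. destruct (step_cases n); auto. exfalso; apply Hn; exists n; auto. }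
  destruct y_bounded as [C HC].
  set (O := fun N => sum_f_R0 (fun i => y (out i)) N).
  assert (HO : forall k, O (n0 + k)%nat <= O n0 + 2 - 2 * (/2)^k).
  { induction k.
    - rewrite Nat.add_0_r. simpl. lra.
    - replace (n0 + S k)%nat with (S (n0 + k)) by lia.
      unfold O in *. simpl sum_f_R0.
      assert (y (out (S (n0 + k))) <= (/2)^n0 * (/2)^(S k)).
      { rewrite <- pow_add. replace (n0 + S k)%nat with (S (n0+k)) by lia.
        apply T_small, HT; lia. }
      assert ((/2)^n0 <= 1) by apply half_pow_le1.
      assert (0 < (/2)^(S k)) by apply half_pow_pos.
      assert ((/2)^n0 * (/2)^(S k) <= (/2)^(S k)) by nra.
      simpl pow in *. assert (0 < (/2)^k) by apply half_pow_pos. lra. }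
  assert (HT2 : forall N, (n0 <= N)%nat -> sum_f_R0 y N <= delta + C + O n0 + 2).
  { intros N HN.
    assert (E : sum_f_R0 y N = (Pv N - Bv N) + O N).
    { rewrite <- D_eq. unfold O. rewrite minus_sum. lra. }
    assert (0 <= Bv N) by apply B_nonneg.
    assert (Pv N <= Pv (S N)) by (rewrite (P_T (S N)) by (apply HT; lia); apply a_ge_P).
    assert (Pv (S N) <= delta + C).
    { destruct (P_T_bound (S N)) as [Z|(M&_&HM)]. apply HT; lia.
      - rewrite Z. assert (0 < y 0%nat) by apply hy. specialize (HC 0%nat). lra.
      - specialize (HC M). lra. }
    assert (O N <= O n0 + 2).
    { replace N with (n0 + (N - n0))%nat by lia.
      specialize (HO (N - n0)%nat). assert (0 < (/2)^(N - n0)) by apply half_pow_pos. lra. }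
    lra. }
  apply hdiv. apply Un_cv_crit. apply sum_growing.
  exists (delta + Rabs C + Rabs (O n0) + 2 + sum_f_R0 y n0).
  intros z [N ->].
  assert (0 <= sum_f_R0 y n0) by (apply cond_pos_sum; intro; left; apply hy).
  assert (C <= Rabs C) by apply Rle_abs. assert (O n0 <= Rabs (O n0)) by apply Rle_abs.
  assert (0 <= Rabs C) by apply Rabs_pos. assert (0 <= Rabs (O n0)) by apply Rabs_pos.
  destruct (Nat.le_gt_cases n0 N).
  - specialize (HT2 N H4). lra.
  - assert (sum_f_R0 y N <= sum_f_R0 y n0) by (apply tech9; [apply sum_growing|lia]).
    specialize (HT2 n0 (le_n _)). lra.
Qed.

Lemma A_le i : isA i -> (out i <= i)%nat.
Proof.
  intros (a0&t&Hp&_&Ho).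
  assert (Hin : In (out i) (pend i (hist i))) by (rewrite Hp, Ho; apply amax_in).
  apply In_pend in Hin. tauto.
Qed.

Lemma filter_nil_all (p : nat -> bool) l : (forall x, In x l -> p x = false) -> filter p l = [].
Proof.
  intro H. destruct (filter p l) as [|z r] eqn:E; auto.
  assert (In z (filter p l)) by (rewrite E; left; auto).
  apply filter_In in H0. destruct H0 as [H1 H2]. rewrite (H z H1) in H2. discriminate.
Qed.

Lemma IT n0 : exists n, (n0 <= n)%nat /\ isT n.
Proof.
  apply NNPP; intro Hn.
  assert (HA : forall n, (n0 <= n)%nat -> isA n).
  { intros n Hle. destruct (step_cases n); auto. exfalso; apply Hn; exists n; auto. }
  set (L := (n0 + list_max (hist n0))%nat).
  assert (Hout : forall i, (i <= L)%nat -> (out i <= L)%nat).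
  { intros i Hi. destruct (Nat.lt_ge_cases i n0).
    - assert (In (out i) (hist n0)) by (apply In_hist; exists i; auto).
      apply in_le_list_max in H0. unfold L. lia.
    - assert (out i <= i)%nat by (apply A_le, HA; auto). lia. }
  assert (HB : filter (Nat.ltb L) (hist (S L)) = []).
  { apply filter_nil_all. intros z Hz. apply In_hist in Hz. destruct Hz as (i&Hi&<-).
    apply Nat.ltb_ge. apply Hout. lia. }
  assert (Hpend : pend L (hist (S L)) = []).
  { apply lsum_one_zero.
    assert (Hi := identity (fun _ => 1) L). rewrite HB in Hi.
    rewrite (sum_eq _ (fun _ => 0)) in Hi by (intros; lra).
    rewrite sum_zero in Hi. change (lsum (fun _ : nat => 1) []) with 0 in Hi. lra. }
  destruct (HA (S L) ltac:(unfold L; lia)) as (a0&t&Hp&Hd&Ho).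
  rewrite pend_S, Hpend in Hp.
  destruct (in_dec Nat.eq_dec (S L) (hist (S L))); simpl in Hp; [discriminate|].
  injection Hp as <- <-. simpl amax in Hd. unfold lsum in Hd. simpl in Hd. lra.
Qed.

Lemma SJ k : exists i, out i = k.
Proof.
  apply NNPP; intro Hk.
  assert (Hp : forall n, (k <= n)%nat -> In k (pend n (hist n))).
  { intros n Hn. apply In_pend. split; auto. intro H. apply In_hist in H.
    destruct H as (i&_&Hi). apply Hk; exists i; auto. }
  destruct (hy0 (y k) (hy k)) as [J HJ].
  assert (Hl : forall m, exists l, length l = m /\ NoDup l /\
                 forall i, In i l -> (k <= i)%nat /\ isA i).
  { induction m.
    - exists []. split; auto. split; [constructor|]. intros i [].
    - destruct IHm as (l&Hlen&Hnd&Hi).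
      destruct (IA (S (k + list_max l))) as (n&Hn&HA).
      exists (n :: l). split; [simpl; auto|split].
      + constructor; auto. intro H. apply in_le_list_max in H. lia.
      + intros i [<-|H]; [split; auto; lia|auto]. }
  destruct (Hl (S J)) as (l&Hlen&Hnd&Hi).
  assert (Hinc : incl (map out l) (seq 0 J)).
  { intros z Hz. apply in_map_iff in Hz. destruct Hz as (i&<-&Hil).
    destruct (Hi i Hil) as [Hki (a0&t&Hpend&_&Ho)].
    assert (Hy : y k <= y (out i)).
    { rewrite Ho. apply amax_ge. rewrite <- Hpend. apply Hp; auto. }
    apply in_seq. split; [lia|]. simpl.
    destruct (Nat.lt_ge_cases (out i) J); auto.
    specialize (HJ (out i) H). unfold R_dist in HJ. rewrite Rminus_0_r in HJ.
    apply Rabs_def2 in HJ. lra. }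
  apply NoDup_incl_length in Hinc.
  - rewrite length_map, length_seq in Hinc. lia.
  - apply FinFun.Injective_map_NoDup; auto. intros a b; apply out_inj.
Qed.

Lemma ES eps : 0 < eps -> exists K, forall n, (K <= n)%nat ->
  forall j, In j (pend n (hist n)) -> y j <= eps.
Proof.
  intro He. destruct (hy0 eps He) as [J HJ].
  assert (HK : forall J, exists K, forall j, (j < J)%nat -> exists i, (i < K)%nat /\ out i = j).
  { induction J0 as [|J0 IH].
    - exists 0%nat. intros; lia.
    - destruct IH as [K HK]. destruct (SJ J0) as [i0 Hi0].
      exists (Nat.max K (S i0)). intros j Hj.
      destruct (Nat.eq_dec j J0).
      + subst. exists i0. split; auto; lia.
      + destruct (HK j ltac:(lia)) as (i&Hi&E). exists i; split; auto; lia. }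
  destruct (HK J) as [K HK2]. exists K. intros n Hn j Hj.
  apply In_pend in Hj. destruct Hj as [_ Hj].
  destruct (Nat.lt_ge_cases j J).
  - exfalso. destruct (HK2 j H) as (i&Hi&E). apply Hj. apply In_hist. exists i; split; auto; lia.
  - specialize (HJ j H). unfold R_dist in HJ. rewrite Rminus_0_r in HJ.
    apply Rabs_def2 in HJ. lra.
Qed.

Lemma P_lower : exists n1, forall n, (n1 <= n)%nat -> delta <= Pv n.
Proof.
  destruct (IA 0) as (n1&_&H1). exists n1.
  assert (forall k, delta <= Pv (n1 + k)).
  { induction k.
    - rewrite Nat.add_0_r. apply P_A; auto.
    - replace (n1 + S k)%nat with (S (n1 + k)) by lia.
      destruct (step_cases (S (n1 + k))) as [HA|HT].
      + apply P_A; auto.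
      + rewrite P_T by auto. assert (Pv (n1 + k) <= av (S (n1 + k))) by apply a_ge_P. lra. }
  intros n Hn. replace n with (n1 + (n - n1))%nat by lia. auto.
Qed.

Lemma P_upper eps : 0 < eps -> exists n2, forall n, (n2 <= n)%nat -> Pv n <= delta + eps.
Proof.
  intro He. destruct (ES eps He) as [K HK].
  destruct (IT K) as (n2&Hn2&HT2). exists n2.
  assert (Hb : forall n, (K <= n)%nat -> isT n -> Pv n <= delta + eps).
  { intros n Hn HT. destruct (P_T_bound n HT) as [Z|(M&HM&HP)].
    - rewrite Z; lra.
    - specialize (HK n Hn M HM). lra. }
  assert (forall k, Pv (n2 + k) <= delta + eps).
  { induction k.
    - rewrite Nat.add_0_r. apply Hb; auto.
    - replace (n2 + S k)%nat with (S (n2 + k)) by lia.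
      destruct (step_cases (S (n2 + k))) as [HA|HT].
      + assert (Pv (S (n2 + k)) <= Pv (n2 + k)) by (apply P_A_mono; auto). lra.
      + apply Hb; auto; lia. }
  intros n Hn. replace n with (n2 + (n - n2))%nat by lia. auto.
Qed.

Lemma geo m N : sum_f_R0 (fun i => if Nat.leb m i then (/2)^i else 0) N =
  if Nat.leb m N then 2 * (/2)^m - 2 * (/2)^(S N) else 0.
Proof.
  induction N.
  - simpl. destruct m; simpl; lra.
  - cbn [sum_f_R0]. rewrite IHN.
    destruct (Nat.leb_spec m N); destruct (Nat.leb_spec m (S N)); try lia.
    + simpl. lra.
    + replace m with (S N) by lia. simpl. lra.
    + lra.
Qed.

Lemma B_zero eps : 0 < eps -> exists N0, forall N, (N0 <= N)%nat -> Bv N <= eps.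
Proof.
  intro He.
  destruct (pow_lt_1_zero (/2) ltac:(rewrite Rabs_right; lra) (eps/2) ltac:(lra)) as [K HK].
  specialize (HK K (le_n _)). rewrite Rabs_right in HK by (left; apply half_pow_pos).
  set (L := (K + list_max (hist K))%nat). exists L. intros N HN.
  unfold Bv. rewrite lsum_hist.
  apply Rle_trans with (sum_f_R0 (fun i => if Nat.leb K i then (/2)^i else 0) N).
  - apply sum_Rle. intros i Hi.
    destruct (Nat.ltb_spec N (out i)).
    + destruct (Nat.leb_spec K i).
      * destruct (out_bound i); [lia|auto].
      * exfalso. assert (In (out i) (hist K)) by (apply In_hist; exists i; split; auto).
        apply in_le_list_max in H1. unfold L in HN. lia.
    + destruct (Nat.leb K i); [left; apply half_pow_pos|lra].
  - rewrite geo. destruct (Nat.leb K N).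
    + assert (0 < (/2)^(S N)) by apply half_pow_pos. lra.
    + lra.
Qed.

Lemma key_result : (forall m n, out m = out n -> m = n) /\ (forall k, exists n, out n = k) /\
  Un_cv (fun N => sum_f_R0 (fun n => y n - y (out n)) N) delta.
Proof.
  split; [exact out_inj|split; [exact SJ|]].
  intros eps He.
  destruct P_lower as [n1 H1].
  destruct (P_upper (eps/2) ltac:(lra)) as [n2 H2].
  destruct (B_zero (eps/2) ltac:(lra)) as [n3 H3].
  exists (n1 + n2 + n3)%nat. intros N HN.
  rewrite D_eq. unfold R_dist.
  specialize (H1 N ltac:(lia)). specialize (H2 N ltac:(lia)). specialize (H3 N ltac:(lia)).
  assert (0 <= Bv N) by apply B_nonneg.
  apply Rabs_def1; lra.
Qed.

End Key.

Lemma key (y : nat -> R) (delta : R) : (forall n, 0 < y n) -> Un_cv y 0 ->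
  ~ (exists l, Un_cv (sum_f_R0 y) l) -> 0 < delta ->
  exists pi, is_perm_nat pi /\ rearr_diff_sum y pi delta.
Proof.
  intros H1 H2 H3 H4.
  destruct (key_result y delta H1 H2 H3 H4) as (a&b&c).
  eexists. split; [split|]; [exact a|exact b|exact c].
Qed.

Lemma perm_bound s : is_perm_nat s -> forall N0, exists M, forall m, (M <= m)%nat -> (N0 <= s m)%nat.
Proof.
  intros [Hi Hs] N0. induction N0.
  - exists 0%nat; intros; lia.
  - destruct IHN0 as [M HM]. destruct (Hs N0) as [p Hp].
    exists (Nat.max M (S p)). intros m Hm.
    specialize (HM m ltac:(lia)).
    destruct (Nat.eq_dec (s m) N0); [|lia].
    rewrite <- Hp in e. apply Hi in e. lia.
Qed.

Lemma perm_null s x : is_perm_nat s -> Un_cv x 0 -> Un_cv (fun n => x (s n)) 0.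
Proof.
  intros Hp Hx eps He. destruct (Hx eps He) as [N HN].
  destruct (perm_bound s Hp N) as [M HM]. exists M. intros n Hn. apply HN. apply HM. lia.
Qed.

Lemma pos_growing f : (forall n, 0 < f n) -> Un_growing (sum_f_R0 f).
Proof. intros H n. simpl. specialize (H (S n)). lra. Qed.

Lemma perm_div s x : is_perm_nat s -> (forall n, 0 < x n) ->
  ~ (exists l, Un_cv (sum_f_R0 x) l) -> ~ (exists l, Un_cv (sum_f_R0 (fun n => x (s n))) l).
Proof.
  intros [Hi Hs] Hpos Hd [L HL]. apply Hd. apply Un_cv_crit; [apply pos_growing; auto|].
  exists L. intros z [N ->].
  assert (HM : exists M, forall k, (k <= N)%nat -> exists m, (m <= M)%nat /\ s m = k).
  { induction N.
    - destruct (Hs 0%nat) as [p Hp]. exists p. intros k Hk. exists p. split; [lia|]. rewrite Hp; lia.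
    - destruct IHN as [M HM]. destruct (Hs (S N)) as [p Hp]. exists (Nat.max M p).
      intros k Hk. destruct (Nat.eq_dec k (S N)).
      + subst. exists p; split; auto; lia.
      + destruct (HM k ltac:(lia)) as (m&Hm&E). exists m; split; auto; lia. }
  destruct HM as [M HM].
  apply Rle_trans with (sum_f_R0 (fun n => x (s n)) M).
  - rewrite <- !lsum_seq. rewrite <- (lsum_map x s).
    apply lsum_incl.
    + intro; left; auto.
    + apply seq_NoDup.
    + apply FinFun.Injective_map_NoDup; [intros a b; apply Hi|apply seq_NoDup].
    + intros k Hk. apply in_seq in Hk. destruct (HM k ltac:(lia)) as (m&Hm&E).
      apply in_map_iff. exists m. split; auto. apply in_seq. lia.
  - apply growing_ineq; auto. apply pos_growing. auto.
Qed.

Lemma upward x s d : (forall n, 0 < x n) -> Un_cv x 0 -> ~ (exists l, Un_cv (sum_f_R0 x) l) ->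
  S_set x s -> 0 < d -> S_set x (s + d).
Proof.
  intros Hpos H0 Hd [sg [Hp Hs]] Hdd.
  destruct (key (fun n => x (sg n)) d) as (pi&[Hpi1 Hpi2]&Hc); auto.
  - apply perm_null; auto.
  - apply perm_div; auto.
  - exists (fun n => sg (pi n)). split.
    + destruct Hp as [Hs1 Hs2]. split.
      * intros m n E. apply Hpi1, Hs1. auto.
      * intro k. destruct (Hs2 k) as [n0 Hn0]. destruct (Hpi2 n0) as [n1 Hn1].
        exists n1. rewrite Hn1. auto.
    + unfold rearr_diff_sum in *.
      apply Un_cv_ext with (fun N => sum_f_R0 (fun n => x n - x (sg n)) N +
                                    sum_f_R0 (fun n => x (sg n) - x (sg (pi n))) N).
      * intro N. rewrite !minus_sum. lra.
      * apply CV_plus; auto.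
Qed.

Theorem mainTheorem7 (x : nat -> R)
  (hpos : forall n, 0 < x n)
  (hdiv : ~ (exists l, Un_cv (fun N => sum_f_R0 x N) l))
  (hlim : Un_cv x 0) :
  (forall r, S_set x r) \/
  (exists c, (forall r, S_set x r <-> c <= r) \/ (forall r, S_set x r <-> c < r)).
Proof.
  assert (hdiv' : ~ (exists l, Un_cv (sum_f_R0 x) l)) by exact hdiv.
  assert (Hup : forall s t, S_set x s -> s < t -> S_set x t).
  { intros s t Hs Hst. replace t with (s + (t - s)) by lra. apply upward; auto. lra. }
  assert (H0 : S_set x 0).
  { exists (fun n => n). split; [split; eauto|].
    intros eps He. exists 0%nat. intros n _. unfold R_dist.
    rewrite (sum_eq _ (fun _ => 0)) by (intros; lra). rewrite sum_zero.
    rewrite Rminus_0_r, Rabs_R0. auto. }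
  destruct (classic (forall r, exists s, S_set x s /\ s <= r)) as [Hall|Hn].
  - left. intro r. destruct (Hall r) as (s&Hs&Hsr).
    destruct (Req_dec s r); [subst; auto|]. apply (Hup s); auto. lra.
  - right. apply not_all_ex_not in Hn. destruct Hn as [r0 Hr0].
    assert (Hlb : forall s, S_set x s -> r0 < s).
    { intros s Hs. destruct (Rlt_le_dec r0 s); auto. exfalso. apply Hr0. exists s; auto. }
    set (E := fun z => S_set x (- z)).
    assert (Hb : bound E).
    { exists (- r0). intros z Hz. apply Hlb in Hz. lra. }
    assert (He : exists z, E z). { exists 0. unfold E. rewrite Ropp_0. auto. }
    destruct (completeness E Hb He) as [m [Hm1 Hm2]].
    exists (- m).
    assert (Hc1 : forall s, S_set x s -> - m <= s).
    { intros s Hs. assert (E (- s)) by (unfold E; rewrite Ropp_involutive; auto).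
      apply Hm1 in H. lra. }
    assert (Hc2 : forall r, - m < r -> S_set x r).
    { intros r Hr. destruct (classic (exists s, S_set x s /\ s < r)) as [(s&Hs&Hsr)|Hno].
      - apply (Hup s); auto.
      - exfalso. assert (m <= - r).
        { apply Hm2. intros z Hz. unfold E in Hz.
          destruct (Rlt_le_dec (- z) r); [exfalso; apply Hno; exists (- z); auto|lra]. }
        lra. }
    destruct (classic (S_set x (- m))) as [Hin|Hout].
    + left. intro r. split; [apply Hc1|]. intro Hr.
      destruct (Req_dec (- m) r); [subst; auto|]. apply Hc2. lra.
    + right. intro r. split; [|apply Hc2]. intro Hr.
      assert (- m <= r) by (apply Hc1; auto).
      destruct (Req_dec (- m) r); [subst; contradiction|lra].
Qed.
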